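(* For every $n\in\mathbb{N}$, every proper subinterval of $I_{n+1}$ is a subinterval of $I_n$ or of $\ell_nI_n$.
   Context: $\mathbb{F}$ is the free group on generators $a,b$ with identity $e$. For $n=4k+i$ with $k\in\mathbb{N}$ and $0\le i<4$, set $\ell_n=a,a^{-1},b,b^{-1}$ according as $i=0,1,2,3$. For $g\in\mathbb{F}$ and $S\subseteq\mathbb{F}$ let $gS=\{gs:s\in S\}$. Define $I_0=\{e\}$ and $I_{n+1}=I_n\cup\ell_nI_n$. An interval of $\mathbb{F}$ is either the empty set or a set of the form $wI_n$ with $w\in\mathbb{F}$, $n\in\mathbb{N}$; $\mathbb{I}$ denotes the set of intervals. If $I,J\in\mathbb{I}$ and $J\subseteq I$, $J$ is a subinterval of $I$, written $J\le I$. *)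

(* Defs.v *)
From mathcomp Require Import all_boot.
Set Implicit Arguments. Unset Strict Implicit. Unset Printing Implicit Defensive.

(* A letter is (is_b, is_inverse): (false,false)=a, (false,true)=a^-1,
   (true,false)=b, (true,true)=b^-1. *)
Definition letter := (bool * bool)%type.
Definition la : letter := (false, false).
Definition la_inv : letter := (false, true).
Definition lb : letter := (true, false).
Definition lb_inv : letter := (true, true).
Definition linv (x : letter) : letter := (x.1, ~~ x.2).

Definition word := seq letter.

Definition push (x : letter) (w : word) : word :=
  match w with
  | y :: s => if y == linv x then s else x :: y :: s
  | [::] => [:: x]
  end.

Definition reduce (w : word) : word := foldr push [::] w.
Definition reduced (w : word) : Prop := reduce w = w.

(* Elements of F are the reduced words; e is the empty word. *)
Definition e : word := [::].
Definition fmul (u v : word) : word := reduce (u ++ v).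

Definition fset := word -> Prop.
Definition lmul (g : word) (S : fset) : fset :=
  fun x => exists2 s, S s & x = fmul g s.
Definition fsubset (S T : fset) : Prop := forall x, S x -> T x.
Definition seteq (S T : fset) : Prop := forall x, S x <-> T x.

Definition ell (n : nat) : word :=
  match n %% 4 with
  | 0 => [:: la]
  | 1 => [:: la_inv]
  | 2 => [:: lb]
  | _ => [:: lb_inv]
  end.

Fixpoint I (n : nat) : fset :=
  match n with
  | 0 => fun x => x = e
  | m.+1 => fun x => I m x \/ lmul (ell m) (I m) x
  end.

Definition is_interval (S : fset) : Prop :=
  seteq S (fun _ => False) \/
  exists w n, reduced w /\ seteq S (lmul w (I n)).

(* Main.v *)
Require Import Defs.
From mathcomp Require Import all_boot.
Set Implicit Arguments. Unset Strict Implicit.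

Lemma linvK x : linv (linv x) = x.
Proof. by case: x => a b; rewrite /linv /= negbK. Qed.

Lemma linv_neq x : (x == linv x) = false.
Proof. by case: x => a []; rewrite /linv /= xpair_eqE /= andbF. Qed.

Definition rr (x y : letter) : bool := y != linv x.
Definition rd (w : word) : bool := sorted rr w.

Lemma rd_cons x w : rd (x :: w) = (match w with [::] => true | y :: _ => y != linv x end) && rd w.
Proof. by case: w. Qed.

Lemma rd_tail x w : rd (x :: w) -> rd w.
Proof. by rewrite rd_cons => /andP[]. Qed.

Lemma push_rd x w : rd w -> rd (push x w).
Proof.
case: w => [|y s] //= H.
case: eqP => E; first by case: s H => //= z s /andP[].
by rewrite /rd /= /rr; apply/andP; split => //; apply/eqP.
Qed.

Lemma reduce_rd w : rd (reduce w).
Proof. by elim: w => //= x w IH; apply: push_rd. Qed.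

Lemma rd_reduce w : rd w -> reduce w = w.
Proof.
elim: w => //= x w IH H.
rewrite IH; last exact: rd_tail H.
case: w H {IH} => //= y s /andP[H _].
by rewrite (negbTE H).
Qed.

Lemma reducedP w : reduced w <-> rd w.
Proof.
split; first by rewrite /reduced => <-; apply: reduce_rd.
exact: rd_reduce.
Qed.

Lemma reduce_idem w : reduce (reduce w) = reduce w.
Proof. exact/rd_reduce/reduce_rd. Qed.

Lemma push_cancel x z : rd z -> push x (push (linv x) z) = z.
Proof.
case: z => [|y z] /=; first by rewrite eqxx.
case: eqP => E H.
  rewrite linvK in E; subst y.
  case: z H => //= c z /andP[H _].
  by rewrite (negbTE H).
by rewrite /= eqxx.
Qed.

Lemma foldr_push_rd r s : rd r -> rd (foldr push r s).
Proof. by move=> H; elim: s => //= x s IH; apply: push_rd. Qed.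

Lemma foldr_push_comm r x s : rd r ->
  foldr push r (push x s) = push x (foldr push r s).
Proof.
move=> Hr; case: s => [|y s] //=.
case: eqP => E //=; subst y.
by rewrite push_cancel //; apply: foldr_push_rd.
Qed.

Lemma foldr_push_reduce r u : rd r -> foldr push r (reduce u) = foldr push r u.
Proof.
move=> Hr; elim: u => //= x u IH.
by rewrite foldr_push_comm // IH.
Qed.

Lemma reduce_cat u v : reduce (u ++ v) = foldr push (reduce v) u.
Proof. by rewrite /reduce foldr_cat. Qed.

Lemma reduce_catr u v : reduce (u ++ reduce v) = reduce (u ++ v).
Proof. by rewrite !reduce_cat reduce_idem. Qed.

Lemma reduce_catl u v : reduce (reduce u ++ v) = reduce (u ++ v).
Proof. by rewrite !reduce_cat foldr_push_reduce //; apply: reduce_rd. Qed.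

Lemma fmulA u v w : fmul (fmul u v) w = fmul u (fmul v w).
Proof. by rewrite /fmul reduce_catl reduce_catr catA. Qed.

Lemma fmul_rd u v : rd (fmul u v).
Proof. exact: reduce_rd. Qed.

Lemma fmul1w w : rd w -> fmul e w = w.
Proof. by move=> H; rewrite /fmul /= rd_reduce. Qed.

Lemma fmulw1 w : rd w -> fmul w e = w.
Proof. by move=> H; rewrite /fmul cats0 rd_reduce. Qed.

Definition winv (w : word) : word := rev (map linv w).

Lemma winvK w : winv (winv w) = w.
Proof. by rewrite /winv map_rev revK -map_comp (eq_map linvK) map_id. Qed.

Lemma winv_cat u v : winv (u ++ v) = winv v ++ winv u.
Proof. by rewrite /winv map_cat rev_cat. Qed.

Lemma rd_winv w : rd (winv w) = rd w.
Proof.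
rewrite /rd /winv rev_sorted sorted_map; apply: eq_sorted => x y.
by case: x => [[] []]; case: y => [[] []].
Qed.

Lemma fmulVw w : fmul (winv w) w = e.
Proof.
elim: w => // x w IH.
rewrite /winv /= rev_cons -cats1 -/(winv w) /fmul -catA /= reduce_cat /=.
have H := push_cancel (linv x) (reduce_rd w); rewrite linvK in H; rewrite H.
by rewrite -reduce_cat.
Qed.

Lemma fmulwV w : fmul w (winv w) = e.
Proof. by rewrite -{1}(winvK w) fmulVw. Qed.

Lemma winv_reduce w : reduce (winv w) = winv (reduce w).
Proof.
set y := reduce (winv w); set z := winv (reduce w); set x := reduce w.
have Hxy : fmul x y = e by rewrite /fmul reduce_catl reduce_catr -/(fmul _ _) fmulwV.
have Hzx : fmul z x = e by rewrite fmulVw.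
have Hy : rd y by apply: reduce_rd.
have Hz : rd z by rewrite rd_winv; apply: reduce_rd.
by rewrite -(fmul1w Hy) -Hzx fmulA Hxy fmulw1.
Qed.

Lemma winv_fmul u v : winv (fmul u v) = fmul (winv v) (winv u).
Proof. by rewrite /fmul -winv_reduce winv_cat. Qed.

Lemma rd_prefix p s : rd (p ++ s) -> rd p.
Proof. by move/cat_sorted2 => []. Qed.

Lemma prefix_fmul x y p s : rd x -> rd y -> fmul x y = p ++ s ->
  (exists s', x = p ++ s') \/ (exists q s', y = q ++ s' /\ p = fmul x q).
Proof.
elim: x p s => [|a x IH] p s Hx Hy.
  rewrite /fmul /= rd_reduce // => E.
  right; exists p, s; split => //.
  rewrite /fmul /= rd_reduce //; apply: (@rd_prefix p s); by rewrite -E.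
have Hx' : rd x := rd_tail Hx.
have Hfa : forall q, fmul (a :: x) q = push a (fmul x q) by [].
rewrite Hfa.
case E: (fmul x y) => [|c r] /=.
  case: p => [|a' p] /=; first by move=> _; left; exists (a :: x).
  case=> <- {a'}; case: p => // _.
  by left; exists x.
case: eqP => Hc.
  move=> Er; subst c.
  have := IH (linv a :: p) s Hx' Hy; rewrite E Er => /(_ erefl) [[s' Ex]|[q [s' [Ey Ep]]]].
    by move: Hx; rewrite Ex rd_cons /= eqxx.
  right; exists q, s'; split => //.
  by rewrite Hfa -Ep /= eqxx.
case: p => [|a' p] /=; first by move=> _; left; exists (a :: x).
case=> <- {a'} Er.
have := IH p s Hx' Hy; rewrite E Er => /(_ erefl) [[s' Ex]|[q [s' [Ey Ep]]]].
  by left; exists s'; rewrite Ex.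
right; exists q, s'; split => //.
rewrite Hfa -Ep.
case: p Er Ep => [|c' p] //= [<- _] _.
by case: eqP.
Qed.

Lemma ell_letter m : exists c, ell m = [:: c].
Proof. rewrite /ell; case: (m %% 4) => [|[|[|k]]]; by eexists. Qed.

Fixpoint Tr (m k : nat) : fset :=
  match k with
  | 0 => fun x => x = e
  | k'.+1 => fun x => Tr m k' x \/ lmul (ell (m + k')) (Tr m k') x
  end.

Lemma I_rd n x : I n x -> rd x.
Proof.
elim: n x => [|n IH] x /=; first by move=> ->.
by case=> [/IH //|[s _ ->]]; apply: fmul_rd.
Qed.

Lemma Tr_rd m k x : Tr m k x -> rd x.
Proof.
elim: k x => [|k IH] x /=; first by move=> ->.
by case=> [/IH //|[s _ ->]]; apply: fmul_rd.
Qed.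

Lemma Tr_e m k : Tr m k e.
Proof. by elim: k => [|k IH] //=; left. Qed.

Lemma I_Tr n x : I n x <-> Tr 0 n x.
Proof.
elim: n x => [|n IH] x //=.
rewrite add0n; split.
  case=> [/IH|[s /IH Hs ->]]; [by left|by right; exists s].
case=> [/IH|[s /IH Hs ->]]; [by left|by right; exists s].
Qed.

Lemma Tr_split m k x : Tr m k.+1 x ->
  Tr m.+1 k x \/ exists2 t, Tr m.+1 k t & x = fmul t (ell m).
Proof.
elim: k x => [|k IH] x /=.
  rewrite addn0; case=> [->|[s -> ->]]; first by left.
  right; exists e => //; rewrite /fmul /= cats0.
  by case: (ell_letter m) => c ->.
case=> [/IH [H|[t Ht ->]]|[y /IH [H|[t Ht ->]] ->]].
- by left; left.
- by right; exists t => //; left.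
- by left; right; exists y => //; rewrite addSn addnS.
- right; exists (fmul (ell (m + k.+1)) t); last by rewrite fmulA.
  by right; exists t => //; rewrite addSn addnS.
Qed.

Lemma Tr_sub_I m k w : Tr m k w -> fsubset (lmul w (I m)) (I (m + k)).
Proof.
elim: k w => [|k IH] w /=.
  by move=> -> x [s Hs ->]; rewrite addn0 fmul1w //; apply: (I_rd Hs).
case=> [/IH H|[t /IH H ->]] x [s Hs ->]; rewrite addnS /=.
  by left; apply: H; exists s.
right; exists (fmul t s); first by apply: H; exists s.
by rewrite fmulA.
Qed.

Definition conv (S : fset) := forall u v p s, S u -> S v ->
  fmul (winv u) v = p ++ s -> S (fmul u p).

Lemma conv_lmul (S : fset) g : (forall x, S x -> rd x) -> conv S -> conv (lmul g S).
Proof.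
move=> Srd HS u v p s [a Ha ->] [b Hb ->] E.
exists (fmul a p); last by rewrite fmulA.
apply: (HS a b p s) => //.
rewrite -E winv_fmul fmulA -(fmulA (winv g)) fmulVw fmul1w //.
exact: Srd.
Qed.

Lemma prefix1 (c : letter) (q s : word) : [:: c] = q ++ s -> q = [::] \/ q = [:: c].
Proof. case: q => [|c' q]; first by left. by case=> -> E; right; case: q E. Qed.

Lemma fmul1r x q : fmul x (fmul e q) = fmul x q.
Proof. by rewrite /fmul reduce_catr. Qed.

Lemma rd_winvI w : rd w -> rd (winv w).
Proof. by rewrite rd_winv. Qed.

Lemma conv_union (S : fset) c : (forall x, S x -> rd x) -> S e -> conv S ->
  conv (fun x => S x \/ lmul [:: c] S x).
Proof.
move=> Srd Se HS u v p s [Hu|Hu] [Hv|Hv] E.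
- by left; apply: (HS u v p s).
- case: Hv => v' Hv' Ev.
  have Hur := Srd _ Hu.
  have Hvr : rd v by rewrite Ev; apply: fmul_rd.
  have [[s' Hs']|[q [s' [Ey Ep]]]] := prefix_fmul (rd_winvI Hur) Hvr E.
    left; apply: (HS u e p s') => //; by rewrite fmulw1 // rd_winv.
  rewrite Ep -fmulA fmulwV.
  have Hq : rd q by apply: (@rd_prefix q s'); rewrite -Ey Ev; apply: fmul_rd.
  rewrite fmul1w //.
  have Hv'r := Srd _ Hv'.
  rewrite Ev in Ey.
  have [[s'' Hs'']|[q' [s'' [Ey' Ep']]]] := prefix_fmul (x:=[:: c]) erefl Hv'r Ey.
    case: (prefix1 Hs'') => ->; first by left.
    by right; exists e.
  have Hq' : rd q' by apply: (@rd_prefix q' s''); rewrite -Ey'.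
  right; exists q' => //.
  have := HS e v' q' s'' Se Hv'.
  by rewrite /= !fmul1w //; apply.
- case: Hu => u' Hu' Eu.
  have Hvr := Srd _ Hv.
  have Hur : rd u by rewrite Eu; apply: fmul_rd.
  have [[s' Hs']|[q [s' [Ey Ep]]]] := prefix_fmul (rd_winvI Hur) Hvr E.
    have Hu'r := Srd _ Hu'.
    move: Hs'; rewrite Eu winv_fmul => Hs'.
    have [[s'' Hs'']|[q [s'' [Ey Ep]]]] := prefix_fmul (y := winv [:: c]) (rd_winvI Hu'r) erefl Hs'.
      right; exists (fmul u' p); last by rewrite fmulA.
      apply: (HS u' e p s'') => //; by rewrite fmulw1 // rd_winv.
    rewrite Ep fmulA -(fmulA u') fmulwV fmul1r.
    case: (prefix1 Ey) => ->.
      by right; exists e.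
    by left; rewrite /fmul /= eqxx.
  left; rewrite Ep -fmulA fmulwV fmul1w.
    have := HS e v q s' Se Hv.
    have Hq : rd q by apply: (@rd_prefix q s'); rewrite -Ey.
    by rewrite /= !fmul1w //; apply.
  by apply: (@rd_prefix q s'); rewrite -Ey.
- right; apply: (conv_lmul (S:=S) (g:=[:: c]) Srd HS Hu Hv E).
Qed.

Lemma conv_Tr m k : conv (Tr m k).
Proof.
elim: k => [|k IH].
  move=> u v p s /= -> -> /=.
  by case: p.
have [c Hc] := ell_letter (m + k).
change (conv (fun x => Tr m k x \/ lmul (ell (m + k)) (Tr m k) x)).
rewrite Hc; apply: conv_union => //.
- exact: Tr_rd.
- exact: Tr_e.
Qed.

Lemma star (S : fset) c u : conv S -> (forall x, S x -> rd x) -> rd u ->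
  S (fmul u [:: linv c]) -> S (fmul u [:: c]) -> S u.
Proof.
move=> HS Srd Hu HU HV.
have E : fmul (winv (fmul u [:: linv c])) (fmul u [:: c]) = [:: c] ++ [:: c].
  rewrite winv_fmul /winv /= linvK -/(winv u) fmulA -(fmulA (winv u)) fmulVw fmul1r.
  by rewrite /fmul /= linv_neq.
have := HS _ _ _ _ HU HV E.
by rewrite fmulA /fmul /= linvK eqxx /= -/(fmul u e) fmulw1.
Qed.

Lemma main m : forall w N, rd w -> fsubset (lmul w (I m)) (I N) ->
  m <= N /\ Tr m (N - m) w.
Proof.
elim: m => [|m IH] w N Hw H.
  split => //; rewrite subn0; apply/I_Tr; apply: H.
  by exists e => //; rewrite fmulw1.
have [c Hc] := ell_letter m.
have H1 : fsubset (lmul w (I m)) (I N).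
  by move=> x [s Hs ->]; apply: H; exists s => //; left.
have H2 : fsubset (lmul (fmul w (ell m)) (I m)) (I N).
  move=> x [s Hs ->]; apply: H; exists (fmul (ell m) s); last by rewrite fmulA.
  by right; exists s.
have [Hm1 T1] := IH w N Hw H1.
have [_ T2] := IH _ N (fmul_rd _ _) H2.
case EN: (N - m) => [|k] in T1 T2.
  move: T1 T2 => /= ->; rewrite Hc /fmul /= => //.
have Hk : N - m.+1 = k by rewrite subnS EN.
split; first by rewrite -subn_gt0 EN.
rewrite Hk.
have Trd := @Tr_rd m.+1 k.
case: (Tr_split T1) => // [[t Ht Ew]].
case: (Tr_split T2) => [H3|[t' Ht' Ew']].
  apply: (@star (Tr m.+1 k) c w (@conv_Tr m.+1 k) Trd Hw) => //; last by rewrite -Hc.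
  by rewrite Ew Hc fmulA /fmul /= eqxx -/(fmul t e) fmulw1 //; apply: Trd.
have : fmul (fmul w (ell m)) [:: linv c] = fmul (fmul t' (ell m)) [:: linv c] by rewrite Ew'.
rewrite Hc !fmulA /fmul /= eqxx -/(fmul w e) -/(fmul t' e) fmulw1 // fmulw1 => [->//|].
exact: Trd.
Qed.

Unset Implicit Arguments.
Theorem lemma2p5 (n : nat) (J : fset) :
  is_interval J -> fsubset J (I n.+1) -> ~ seteq J (I n.+1) ->
  fsubset J (I n) \/ fsubset J (lmul (ell n) (I n)).
Proof.
case=> [HJ|[w [m [Hw HJ]]]] Hsub Hne.
  by left => x /HJ.
have Hw' : rd w by apply/reducedP.
have Hs : fsubset (lmul w (I m)) (I n.+1) by move=> x /HJ /Hsub.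
have [Hm T] := main Hw' Hs.
case: (ltnP n m) => Hnm.
  have Em : m = n.+1 by apply/eqP; rewrite eqn_leq Hm Hnm.
  subst m; rewrite subnn /= in T; subst w.
  exfalso; apply: Hne => x; split; first by move/Hsub.
  move=> Hx; apply/HJ; exists x => //; rewrite fmul1w //; exact: I_rd Hx.
move: T; rewrite subSn // => /= [[T|[t Ht Ew]]].
  left => x /HJ Hx; have := Tr_sub_I T Hx; by rewrite subnKC.
right => x /HJ [s Hs0 ->].
have Ht' := Tr_sub_I Ht; rewrite subnKC // in Ht'.
exists (fmul t s); first by apply: Ht'; exists s.
by rewrite Ew subnKC // fmulA.
Qed.
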